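(* Let $n\ge 0$, $k\ge1$ be integers. Let $\mathcal A$ be any (deterministic) algorithm that, given oracle access to an arbitrary feasibility function $f:\{0,\dots,n\}^k\to\{\mathbf{true},\mathbf{false}\}$, terminates and outputs exactly the set $P$ of Pareto points of $f$. Then for every feasibility function $f$, the run of $\mathcal A$ on $f$ evaluates $f$ at every co-Pareto point of $f$ (the co-Pareto front induced by $P$).
   Context: For $\vec x,\vec x'\in\{0,\dots,n\}^k$, $\vec x\le_k\vec x'$ iff $x_i\le x'_i$ for all $i$; $\vec x$ is smaller than $\vec x'$ (and $\vec x'$ greater than $\vec x$) if $\vec x\le_k\vec x'$ and $\vec x\neq\vec x'$. A feasibility function is a monotone $f:\{0,\dots,n\}^k\to\{\mathbf{true},\mathbf{false}\}$: if $f(\vec x)=\mathbf{true}$ then $f(\vec x')=\mathbf{true}$ for all $\vec x'$ greater than $\vec x$. A Pareto point of $f$ is an $\vec x$ with $f(\vec x)=\mathbf{true}$ and $f(\vec x')=\mathbf{false}$ for all $\vec x'$ smaller than $\vec x$. A co-Pareto point of $f$ is an $\vec x$ with $f(\vec x)=\mathbf{false}$ and $f(\vec x')=\mathbf{true}$ for all $\vec x'$ greater than $\vec x$. The algorithm accesses $f$ only through queries returning $f(\vec x)$ for chosen points $\vec x$. *)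

(* Defs.v *)
From mathcomp Require Import all_boot.
Set Implicit Arguments. Unset Strict Implicit. Unset Printing Implicit Defensive.

Definition point (n k : nat) := {ffun 'I_k -> 'I_n.+1}.

Definition le_k n k (x x' : point n k) : bool := [forall i, (x i <= x' i)%N].
Definition smaller n k (x x' : point n k) : bool := le_k x x' && (x != x').

Definition feasible n k (f : point n k -> bool) : Prop :=
  forall x x', f x -> smaller x x' -> f x'.

Definition pareto n k (f : point n k -> bool) (x : point n k) : bool :=
  f x && [forall x', smaller x' x ==> ~~ f x'].

Definition co_pareto n k (f : point n k -> bool) (x : point n k) : bool :=
  ~~ f x && [forall x', smaller x x' ==> f x'].

Definition pareto_set n k (f : point n k -> bool) : {set point n k} :=
  [set x | pareto f x].

(* A deterministic oracle algorithm: given the history of queries and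
   answers so far, it either queries a new point (inl x) or halts with an
   output set (inr P). *)
Definition algorithm n k := seq (point n k * bool) -> point n k + {set point n k}.

Fixpoint exec n k (A : algorithm n k) (f : point n k -> bool) (fuel : nat)
  (h : seq (point n k * bool)) : option (seq (point n k * bool) * {set point n k}) :=
  match fuel with
  | 0 => None
  | m.+1 => match A h with
            | inr P => Some (h, P)
            | inl x => exec A f m (rcons h (x, f x))
            end
  end.

Definition computes_pareto n k (A : algorithm n k) : Prop :=
  forall f : point n k -> bool, feasible f ->
    exists fuel h P, exec A f fuel [::] = Some (h, P) /\ P = pareto_set f.

(* Main.v *)
Require Import Defs.
From mathcomp Require Import all_boot.

Lemma exec_sub n k (A : algorithm n k) f fuel h0 h P :
  exec A f fuel h0 = Some (h, P) -> {subset h0 <= h}.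
Proof.
elim: fuel h0 => [|m IH] h0 //=.
case: (A h0) => [y|Q].
  move=> /IH H z Hz; apply: H; by rewrite mem_rcons inE Hz orbT.
by case=> <- _.
Qed.

Lemma exec_agree n k (A : algorithm n k) f g fuel h0 h P :
  exec A f fuel h0 = Some (h, P) ->
  (forall y, y \in [seq q.1 | q <- h] -> f y = g y) ->
  exec A g fuel h0 = Some (h, P).
Proof.
elim: fuel h0 => [|m IH] h0 //=.
case: (A h0) => [y|Q] //.
move=> E Hfg.
have Hy : f y = g y.
  apply: Hfg; have := @exec_sub _ _ _ _ _ _ _ _ E (y, f y).
  rewrite mem_rcons inE eqxx /= => /(_ isT) H.
  by apply/mapP; exists (y, f y).
rewrite -Hy; exact: IH.
Qed.

Lemma exec_det n k (A : algorithm n k) f fuel fuel' h0 r r' :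
  exec A f fuel h0 = Some r -> exec A f fuel' h0 = Some r' -> r = r'.
Proof.
elim: fuel fuel' h0 => [|m IH] [|m'] h0 //=.
case: (A h0) => [y|Q]; first exact: IH.
by move=> [<-] [<-].
Qed.

Theorem lemma6 (n k : nat) (hk : (1 <= k)%N) (A : algorithm n k) :
  computes_pareto A ->
  forall f : point n k -> bool, feasible f ->
  forall fuel h P, exec A f fuel [::] = Some (h, P) ->
  forall x : point n k, co_pareto f x -> x \in [seq q.1 | q <- h].
Proof.
move=> HA f Hf fuel h P E x /andP [fx /forallP Hup].
apply/negPn/negP => Hnx.
pose g := fun y => (y == x) || f y.
have Hsm : forall y, smaller y x -> ~~ f y.
  by move=> y Hy; apply/negP => fy; move: fx; rewrite (Hf _ _ fy Hy).
have Hg : feasible g.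
  move=> y z; rewrite /g => /orP [/eqP -> | fy] Hyz.
    by rewrite (implyP (Hup z) Hyz) orbT.
  by rewrite (Hf _ _ fy Hyz) orbT.
have Eg : exec A g fuel [::] = Some (h, P).
  apply: (@exec_agree _ _ _ f g _ _ _ _ E) => y Hy; rewrite /g.
  case: eqP => // Hyx; by move: Hnx; rewrite -Hyx Hy.
have [fuelf [hf [Pf [Ef HPf]]]] := HA f Hf.
have [fuelg [hg [Pg [Eg' Pge]]]] := HA g Hg.
have := @exec_det _ _ _ _ _ _ _ _ _ E Ef; case=> _ HP.
have := @exec_det _ _ _ _ _ _ _ _ _ Eg Eg'; case=> _ HP'.
have : x \in pareto_set g.
  rewrite inE /pareto /g eqxx /=; apply/forallP => y; apply/implyP => Hy.
  rewrite negb_or Hsm // andbT; apply/eqP => Eyx.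
  by move: Hy; rewrite Eyx /smaller eqxx andbF.
rewrite -Pge -HP' HP HPf inE /pareto (negbTE fx) //.
Qed.
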